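(* Let $M\ge 1$ and $0<p_1<p_2<\cdots<p_M$ be real numbers. For arbitrary real constants $c_1,\ldots,c_M$ define, for $(x,t)\in\mathbb{R}^2$, \[ \tau(x,t)=\sum_{A\in\{-1,1\}^M} e^{\Theta_A},\qquad \Theta_A=\sum_{j=1}^M \alpha_j\,\theta_j+\log\Delta_A, \] where $A=(\alpha_1,\ldots,\alpha_M)$, $\theta_j=p_j\,(x+p_j^2\,t+c_j)$, and $\Delta_A=\big|\prod_{1\le j<k\le M}(\alpha_k p_k-\alpha_j p_j)\big|$ (the absolute value of the Vandermonde determinant of $\alpha_1p_1,\ldots,\alpha_Mp_M$). Then $2(\log\tau)_{xx}=2(\log\tau_H)_{xx}$, where $\tau_H$ is the Hirota $\tau$-function \[ \tau_H=\sum_{\mu_1,\ldots,\mu_M=0,1}\exp\Big(\sum_{j=1}^M\mu_j\eta_j+\sum_{1\le j<k\le M}b_{jk}\,\mu_j\mu_k\Big), \] with $\eta_j=2p_j\,(x+p_j^2\,t+\tilde c_j)$, $b_{jk}=\log\big[(p_k-p_j)^2/(p_k+p_j)^2\big]$, and $\tilde c_j=c_j+\frac{1}{2p_j}\log\Big|\prod_{k\neq j}\frac{p_k+p_j}{p_k-p_j}\Big|$. Consequently, $u=2(\log\tau)_{xx}$, as $c_1,\ldots,c_M$ range over $\mathbb{R}$, gives exactly the $M$-soliton solutions $u=2(\log\tau_H)_{xx}$ (with arbitrary real $\tilde c_1,\ldots,\tilde c_M$) of the KdV equation $4u_t=u_{xxx}+6uu_x$.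
   Context: Subscripts denote partial derivatives. The $M$-soliton solution of the KdV equation $4u_t=u_{xxx}+6uu_x$ with parameters $0<p_1<\cdots<p_M$ and arbitrary real constants $\tilde c_j$ is $u=2(\log\tau_H)_{xx}$ with $\tau_H$ as given in the claim. *)

(* Defs.v *)
From HB Require Import structures.
From mathcomp Require Import all_boot all_order all_algebra.
From mathcomp Require Import all_classical all_reals all_analysis.
Set Implicit Arguments. Unset Strict Implicit. Unset Printing Implicit Defensive.
Import Order.TTheory GRing.Theory Num.Theory.
Local Open Scope ring_scope.

Section KdV.
Variables (R : realType) (M : nat).

(* sign vector A in {-1,1}^M encoded by a boolean finite function *)
Definition sgn (b : bool) : R := if b then 1 else -1.
(* 0/1 vector mu encoded by a boolean finite function *)
Definition ind (b : bool) : R := if b then 1 else 0.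

Definition theta (p c : 'I_M -> R) (j : 'I_M) (x t : R) : R :=
  p j * (x + p j ^+ 2 * t + c j).

Definition DeltaA (p : 'I_M -> R) (A : {ffun 'I_M -> bool}) : R :=
  `| \prod_(j < M) \prod_(k < M | (j < k)%N)
       (sgn (A k) * p k - sgn (A j) * p j) |.

Definition ThetaA (p c : 'I_M -> R) (A : {ffun 'I_M -> bool}) (x t : R) : R :=
  \sum_(j < M) sgn (A j) * theta p c j x t + ln (DeltaA p A).

Definition tau (p c : 'I_M -> R) (x t : R) : R :=
  \sum_(A : {ffun 'I_M -> bool}) expR (ThetaA p c A x t).

Definition eta (p ct : 'I_M -> R) (j : 'I_M) (x t : R) : R :=
  2 * p j * (x + p j ^+ 2 * t + ct j).

Definition bjk (p : 'I_M -> R) (j k : 'I_M) : R :=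
  ln ((p k - p j) ^+ 2 / (p k + p j) ^+ 2).

Definition tauH (p ct : 'I_M -> R) (x t : R) : R :=
  \sum_(mu : {ffun 'I_M -> bool})
     expR (\sum_(j < M) ind (mu j) * eta p ct j x t
           + \sum_(j < M) \sum_(k < M | (j < k)%N)
                bjk p j k * ind (mu j) * ind (mu k)).

Definition ctilde (p c : 'I_M -> R) (j : 'I_M) : R :=
  c j + (2 * p j)^-1 *
        ln `| \prod_(k < M | k != j) ((p k + p j) / (p k - p j)) |.

Definition u (p c : 'I_M -> R) (x t : R) : R :=
  2 * derive1n 2 (fun y => ln (tau p c y t)) x.

Definition uH (p ct : 'I_M -> R) (x t : R) : R :=
  2 * derive1n 2 (fun y => ln (tauH p ct y t)) x.

End KdV.

(* Main.v *)
Require Import Defs.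
From HB Require Import structures.
From mathcomp Require Import all_boot all_order all_algebra.
From mathcomp Require Import all_classical all_reals all_analysis.
From mathcomp Require Import lra ring.
Import Defs.
Import Order.TTheory GRing.Theory Num.Theory.
Local Open Scope ring_scope.

Lemma ln_prod (R : realType) (I : Type) (r : seq I) (P : pred I) (F : I -> R) :
  (forall i, P i -> 0 < F i) ->
  ln (\prod_(i <- r | P i) F i) = \sum_(i <- r | P i) ln (F i).
Proof.
move=> hF; elim: r => [|i r IH]; first by rewrite !big_nil ln1.
rewrite !big_cons; case: ifP => Pi //.
rewrite lnM ?IH // posrE; [exact: hF | exact: prodr_gt0].
Qed.

Lemma ln_div (R : realType) (a b : R) : 0 < a -> 0 < b -> ln (a / b) = ln a - ln b.
Proof.
move=> ha hb; rewrite lnM ?posrE ?invr_gt0 // lnV ?posrE //.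
Qed.

Lemma pair_id (R : realType) (a b : R) (aj ak : bool) : 0 < a -> a < b ->
  ln `|sgn R ak * b - sgn R aj * a| =
  ln (b - a) + (ind R aj + ind R ak) * ln ((b + a) / (b - a))
  + ind R aj * ind R ak * ln ((b - a) ^+ 2 / (b + a) ^+ 2).
Proof.
move=> ha hab.
have hd : 0 < b - a by rewrite subr_gt0.
have hs : 0 < b + a by rewrite addr_gt0 // (lt_trans ha hab).
rewrite ln_div // ln_div ?exprn_gt0 // !lnXn //.
case: aj; case: ak; rewrite /sgn /ind /=.
- rewrite (_ : 1 * b - 1 * a = b - a) ?gtr0_norm //; [ring | by ring].
- rewrite (_ : -1 * b - 1 * a = - (b + a)) ?normrN ?gtr0_norm //; [ring|by ring].
- rewrite (_ : 1 * b - -1 * a = (b + a)) ?gtr0_norm //; [ring|by ring].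
- rewrite (_ : -1 * b - -1 * a = - (b - a)) ?normrN ?gtr0_norm //; [ring|by ring].
Qed.

Lemma sgn_nz (R : realType) (a b : R) (aj ak : bool) : 0 < a -> a < b ->
  0 < `|sgn R ak * b - sgn R aj * a|.
Proof.
move=> ha hab.
have hd : 0 < b - a by rewrite subr_gt0.
have hs : 0 < b + a by rewrite addr_gt0 // (lt_trans ha hab).
case: aj; case: ak; rewrite /sgn /=.
- by rewrite (_ : 1 * b - 1 * a = b - a) ?gtr0_norm //; ring.
- by rewrite (_ : -1 * b - 1 * a = - (b + a)) ?normrN ?gtr0_norm //; ring.
- by rewrite (_ : 1 * b - -1 * a = (b + a)) ?gtr0_norm //; ring.
- by rewrite (_ : -1 * b - -1 * a = - (b - a)) ?normrN ?gtr0_norm //; ring.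
Qed.
Lemma dsum (R : realType) (M : nat) (G : 'I_M -> 'I_M -> R) :
  \sum_(j < M) \sum_(k < M | k != j) G j k =
  \sum_(j < M) \sum_(k < M | (j < k)%N) (G j k + G k j).
Proof.
have e : forall j : 'I_M, \sum_(k < M | k != j) G j k =
   \sum_(k < M | (j < k)%N) G j k + \sum_(k < M | (k < j)%N) G j k.
  move=> j; rewrite (bigID (fun k : 'I_M => (j < k)%N)) /=; congr (_ + _).
    apply: eq_bigl => k; rewrite -val_eqE /=.
    by case: ltngtP.
  apply: eq_bigl => k; rewrite -val_eqE /=.
  by case: ltngtP.
rewrite (eq_bigr _ (fun j _ => e j)) big_split /=.
rewrite [in RHS](eq_bigr _ (fun j _ => big_split _ _ _ _ _)) big_split /=.
congr (_ + _).
rewrite (exchange_big_dep xpredT) //=.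

Qed.

Lemma pneq (R : realType) (M : nat) (p : 'I_M -> R)
  (hinc : forall j k : 'I_M, (j < k)%N -> p j < p k) (j k : 'I_M) :
  k != j -> p k - p j != 0.
Proof.
rewrite -val_eqE subr_eq0 /=; case: ltngtP => // h _.
- by rewrite lt_eqF // hinc.
- by rewrite gt_eqF // hinc.
Qed.

Lemma key (R : realType) (M : nat) (p c : 'I_M -> R)
  (hpos : forall j : 'I_M, 0 < p j)
  (hinc : forall j k : 'I_M, (j < k)%N -> p j < p k)
  (A : {ffun 'I_M -> bool}) (y t : R) :
  ThetaA p c A y t =
  (ln (\prod_(j < M) \prod_(k < M | (j < k)%N) (p k - p j))
     - \sum_(j < M) theta p c j y t)
  + (\sum_(j < M) ind R (A j) * eta p (ctilde p c) j y t
     + \sum_(j < M) \sum_(k < M | (j < k)%N)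
          bjk p j k * ind R (A j) * ind R (A k)).
Proof.
have h1 : ln (DeltaA p A) =
  \sum_(j < M) \sum_(k < M | (j < k)%N) ln (p k - p j)
  + \sum_(j < M) \sum_(k < M | (j < k)%N)
      (ind R (A j) + ind R (A k)) * ln ((p k + p j) / (p k - p j))
  + \sum_(j < M) \sum_(k < M | (j < k)%N)
      bjk p j k * ind R (A j) * ind R (A k).
  rewrite /DeltaA normr_prod.
  under eq_bigr do rewrite normr_prod.
  rewrite ln_prod; last first.
    by move=> j _; apply: prodr_gt0 => k jk; apply: sgn_nz; [exact: hpos|exact: hinc].
  rewrite -!big_split /=; apply: eq_bigr => j _.
  rewrite ln_prod; last first.
    by move=> k jk; apply: sgn_nz; [exact: hpos|exact: hinc].
  rewrite -!big_split /=; apply: eq_bigr => k jk.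
  rewrite pair_id; [|exact: hpos|exact: hinc].
  by rewrite /bjk; ring.
have h5 : ln (\prod_(j < M) \prod_(k < M | (j < k)%N) (p k - p j)) =
  \sum_(j < M) \sum_(k < M | (j < k)%N) ln (p k - p j).
  rewrite ln_prod; last first.
    by move=> j _; apply: prodr_gt0 => k jk; rewrite subr_gt0; exact: hinc.
  apply: eq_bigr => j _; rewrite ln_prod // => k jk; rewrite subr_gt0; exact: hinc.
have h4 : \sum_(j < M) ind R (A j) *
     ln `|\prod_(k < M | k != j) ((p k + p j) / (p k - p j))| =
   \sum_(j < M) \sum_(k < M | (j < k)%N)
      (ind R (A j) + ind R (A k)) * ln ((p k + p j) / (p k - p j)).
  have e : forall j : 'I_M, ind R (A j) *
     ln `|\prod_(k < M | k != j) ((p k + p j) / (p k - p j))| =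
     \sum_(k < M | k != j) ind R (A j) * ln `|(p k + p j) / (p k - p j)|.
    move=> j; rewrite normr_prod ln_prod ?mulr_sumr // => k kj.
    rewrite normr_gt0 mulf_neq0 // ?invr_eq0 ?pneq //.
    by rewrite gt_eqF // addr_gt0.
  rewrite (eq_bigr _ (fun j _ => e j)) dsum.
  apply: eq_bigr => j _; apply: eq_bigr => k jk.
  have hjk := hinc _ _ jk.
  have hd : 0 < p k - p j by rewrite subr_gt0.
  have hs : 0 < p k + p j by rewrite addr_gt0.
  rewrite (_ : (p j + p k) / (p j - p k) = - ((p k + p j) / (p k - p j))); last first.
    rewrite -mulrN -invrN opprB; congr (_ / _); ring.
  by rewrite normrN gtr0_norm ?divr_gt0 //; ring.
have h3 : forall j, eta p (ctilde p c) j y t =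
    2 * theta p c j y t +
    ln `|\prod_(k < M | k != j) ((p k + p j) / (p k - p j))|.
  move=> j; rewrite /eta /theta /ctilde.
  have := hpos j; rewrite lt0r => /andP [pj0 _].
  by field.
have h6 : \sum_(j < M) ind R (A j) * eta p (ctilde p c) j y t =
   2 * \sum_(j < M) ind R (A j) * theta p c j y t +
   \sum_(j < M) ind R (A j) *
     ln `|\prod_(k < M | k != j) ((p k + p j) / (p k - p j))|.
  rewrite mulr_sumr -big_split /=; apply: eq_bigr => j _; rewrite h3; ring.
have h7 : \sum_(j < M) sgn R (A j) * theta p c j y t =
   2 * \sum_(j < M) ind R (A j) * theta p c j y t - \sum_(j < M) theta p c j y t.
  rewrite mulr_sumr -sumrB; apply: eq_bigr => j _.
  by case: (A j); rewrite /sgn /ind; ring.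
rewrite /ThetaA h1 h5 h6 h7 -h4; ring.
Qed.

Lemma tau_eq (R : realType) (M : nat) (p c : 'I_M -> R)
  (hpos : forall j : 'I_M, 0 < p j)
  (hinc : forall j k : 'I_M, (j < k)%N -> p j < p k) (y t : R) :
  tau p c y t =
  expR (ln (\prod_(j < M) \prod_(k < M | (j < k)%N) (p k - p j))
     - \sum_(j < M) theta p c j y t) * tauH p (ctilde p c) y t.
Proof.
rewrite /tau /tauH mulr_sumr; apply: eq_bigr => A _.
by rewrite key // expRD.
Qed.

Lemma tauH_gt0 (R : realType) (M : nat) (p ct : 'I_M -> R) (y t : R) :
  0 < tauH p ct y t.
Proof.
rewrite /tauH (bigD1 [ffun => false]) //=.
apply: ltr_wpDr; last exact: expR_gt0.
by apply: sumr_ge0 => i _; apply/ltW/expR_gt0.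
Qed.

Lemma sum_theta (R : realType) (M : nat) (p c : 'I_M -> R) (y t : R) :
  \sum_(j < M) theta p c j y t =
  y * \sum_(j < M) p j + \sum_(j < M) p j * (p j ^+ 2 * t + c j).
Proof.
rewrite mulr_sumr -big_split /=; apply: eq_bigr => j _; rewrite /theta; ring.
Qed.

Lemma derivable_big (R : realType) (I : Type) (s : seq I) (P : pred I)
  (F : I -> R -> R) (x : R) :
  (forall i, derivable (F i) x 1) ->
  derivable (fun y => \sum_(i <- s | P i) F i y) x 1.
Proof.
move=> hF; elim: s => [|i s IH].
  rewrite (_ : (fun y => _) = cst 0); first exact: derivable_cst.
  by apply/funext => y; rewrite big_nil.
case Pi: (P i).
  rewrite (_ : (fun y => _) = F i + (fun y => \sum_(j <- s | P j) F j y)).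
    exact: derivableD.
  by apply/funext => y; rewrite big_cons Pi.
rewrite (_ : (fun y => _) = (fun y => \sum_(j <- s | P j) F j y)) //.
by apply/funext => y; rewrite big_cons Pi.
Qed.

Lemma derivable_comp1 (R : realType) (f g : R -> R) x :
  derivable f x 1 -> derivable g (f x) 1 -> derivable (fun y => g (f y)) x 1.
Proof.
move=> /derivable1_diffP df /derivable1_diffP dg.
by apply/derivable1_diffP; apply: differentiable_comp.
Qed.

Lemma derivable_aff (R : realType) (a b x : R) :
  derivable (fun y => a * y + b) x 1.
Proof.
by rewrite (_ : (fun y => _) = (a *: (@id R)) + cst b) //.
Qed.

Lemma derive_aff (R : realType) (a b x : R) :
  'D_1 (fun y => a * y + b) x = a.
Proof.
rewrite (_ : (fun y => _) = (a *: (@id R)) + cst b) //.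
rewrite deriveD //.
rewrite deriveZ //.
by rewrite derive_id derive_cst addr0 /GRing.scale /= mulr1.
Qed.

Lemma derivable_lntauH (R : realType) (M : nat) (p ct : 'I_M -> R) (t x : R) :
  derivable (fun y => ln (tauH p ct y t)) x 1.
Proof.
have hT : derivable (fun y => tauH p ct y t) x 1.
  rewrite /tauH; apply: derivable_big => mu.
  apply: derivable_comp1; last exact: derivable_expR.
  apply: derivableD; last exact: derivable_cst.
  apply: derivable_big => j.
  rewrite (_ : (fun y => _) = (fun y => (ind R (mu j) * (2 * p j)) * y +
           ind R (mu j) * (2 * p j) * (p j ^+ 2 * t + ct j))).
    exact: derivable_aff.
  by apply/funext => y; rewrite /Defs.eta; ring.
apply: (@derivable_comp1 R (fun y => tauH p ct y t) (@ln R) x hT).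
by apply: ex_derive; apply: is_derive1_ln; exact: tauH_gt0.
Qed.

Lemma D2 (R : realType) (g : R -> R) (P C x : R) :
  (forall y, derivable g y 1) ->
  derive1n 2 (fun y => g y - P * y + C) x = derive1n 2 g x.
Proof.
move=> hg; rewrite /derive1n /=.
have -> : derive1 (fun y => g y - P * y + C) = fun y => derive1 g y - P.
  apply/funext => y; rewrite !derive1E.
  rewrite (_ : (fun y => _) = g + (fun y => (- P) * y + C)); last first.
    by apply/funext => z; rewrite -addrA -mulNr.
  by rewrite deriveD // ?derive_aff //; exact: derivable_aff.
rewrite /derive1; f_equal; f_equal; apply/funext => h.
by rewrite opprB addrA subrK.
Qed.

Theorem proposition1 (R : realType) (M : nat) (p : 'I_M -> R)
  (hM : (1 <= M)%N)
  (hpos : forall j : 'I_M, 0 < p j)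
  (hinc : forall j k : 'I_M, (j < k)%N -> p j < p k) :
  (forall (c : 'I_M -> R) (x t : R), u p c x t = uH p (ctilde p c) x t) /\
  (forall ct : 'I_M -> R, exists c : 'I_M -> R, forall x t : R,
      u p c x t = uH p ct x t).
Proof.
have P1 : forall (c : 'I_M -> R) (x t : R), u p c x t = uH p (ctilde p c) x t.
  move=> c x t; rewrite /u /uH.
  have -> : (fun y => ln (tau p c y t)) =
     (fun y => ln (tauH p (ctilde p c) y t) - (\sum_(j < M) p j) * y
        + (ln (\prod_(j < M) \prod_(k < M | (j < k)%N) (p k - p j))
           - \sum_(j < M) p j * (p j ^+ 2 * t + c j))).
    apply/funext => y; rewrite tau_eq // lnM ?posrE ?expR_gt0 ?tauH_gt0 //.
    rewrite expRK sum_theta; ring.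
  rewrite D2 // => y; exact: derivable_lntauH.
split=> // ct.
exists (fun j => ct j - (2 * p j)^-1 *
        ln `| \prod_(k < M | k != j) ((p k + p j) / (p k - p j)) |).
move=> x t; rewrite P1; congr (uH p _ x t).
by apply/funext => j; rewrite /ctilde subrK.
Qed.
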